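(* Let $\tau\in\mathcal{H}$ with $\Im(\tau)\ge\sqrt3/4$ and let $z\in\mathbb{C}$ with $0\le\Im(z)\le\Im(\tau)/4$. Then $$|\theta_{00}(z,\tau)-\theta_{01}(z,\tau)|<|\theta_{00}(z,\tau)+\theta_{01}(z,\tau)|;$$ consequently $\Re\left(\frac{\theta_{01}(z,\tau)}{\theta_{00}(z,\tau)}\right)>0$ and $\Re\left(\frac{\theta_{01}(0,\tau)}{\theta_{00}(0,\tau)}\right)>0$.
   Context: For $z\in\mathbb{C}$ and $\tau$ in the upper half-plane $\mathcal{H}=\{\tau\in\mathbb{C}:\Im\tau>0\}$, $\theta(z,\tau)=\sum_{n\in\mathbb{Z}}\exp(\pi i\tau n^2+2\pi i n z)$. Set $\theta_{00}(z,\tau)=\theta(z,\tau)$ and $\theta_{01}(z,\tau)=\theta(z+\tfrac12,\tau)$. (The paper states the hypothesis as $\Im\tau$ at least an unspecified constant which it notes is $\le\sqrt3/4$; here $\sqrt3/4$ is used.) *)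

(* Defs.v *)
From Stdlib Require Import Reals Lra ZArith ClassicalEpsilon.
Open Scope R_scope.

Definition Cplx : Type := (R * R)%type.
Definition Re (z : Cplx) : R := fst z.
Definition Im (z : Cplx) : R := snd z.
Definition Cadd (z w : Cplx) : Cplx := (Re z + Re w, Im z + Im w).
Definition Csub (z w : Cplx) : Cplx := (Re z - Re w, Im z - Im w).
Definition Cmul (z w : Cplx) : Cplx :=
  (Re z * Re w - Im z * Im w, Re z * Im w + Im z * Re w).
Definition Cinv (w : Cplx) : Cplx :=
  (Re w / (Re w ^ 2 + Im w ^ 2), - Im w / (Re w ^ 2 + Im w ^ 2)).
Definition Cdiv (z w : Cplx) : Cplx := Cmul z (Cinv w).
Definition Cmod (z : Cplx) : R := sqrt (Re z ^ 2 + Im z ^ 2).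

Definition Cexp (z : Cplx) : Cplx := (exp (Re z) * cos (Im z), exp (Re z) * sin (Im z)).

(* Limit of a real sequence (chosen classically; 0 if it does not converge). *)
Definition Rlim (u : nat -> R) : R :=
  match excluded_middle_informative (exists l, Un_cv u l) with
  | left H => proj1_sig (constructive_indefinite_description _ H)
  | right _ => 0
  end.

(* n-th term of the theta series: exp(pi i tau n^2 + 2 pi i n z).
   pi i tau n^2 + 2 pi i n z = (-pi Im tau n^2 - 2 pi n Im z) + i (pi Re tau n^2 + 2 pi n Re z). *)
Definition theta_term (z tau : Cplx) (n : Z) : Cplx :=
  Cexp (- PI * Im tau * IZR n ^ 2 - 2 * PI * IZR n * Im z,
        PI * Re tau * IZR n ^ 2 + 2 * PI * IZR n * Re z).

Definition theta_partial (z tau : Cplx) (N : nat) : Cplx :=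
  (sum_f_R0 (fun k => Re (theta_term z tau (Z.of_nat k - Z.of_nat N)%Z)) (2 * N),
   sum_f_R0 (fun k => Im (theta_term z tau (Z.of_nat k - Z.of_nat N)%Z)) (2 * N)).

(* theta(z,tau) = sum_{n in Z} exp(pi i tau n^2 + 2 pi i n z)
   (absolutely convergent for Im tau > 0, so equal to the limit of symmetric partial sums). *)
Definition theta (z tau : Cplx) : Cplx :=
  (Rlim (fun N => Re (theta_partial z tau N)), Rlim (fun N => Im (theta_partial z tau N))).

Definition theta00 (z tau : Cplx) : Cplx := theta z tau.
Definition theta01 (z tau : Cplx) : Cplx := theta (Re z + / 2, Im z) tau.

(* Main.v *)
Require Import Defs.
From Stdlib Require Import Reals Lra Lia Psatz ZArith ClassicalEpsilon.
Open Scope R_scope.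

Lemma exp_INR_mult (k : nat) (x : R) : exp (INR k * x) = exp x ^ k.
Proof.
  induction k as [|k IH].
  - simpl. rewrite Rmult_0_l, exp_0; reflexivity.
  - rewrite S_INR, Rmult_plus_distr_r, Rmult_1_l, exp_plus, IH; simpl; ring.
Qed.

Lemma Cmod_ge0 (u : Cplx) : 0 <= Cmod u.
Proof. unfold Cmod; apply sqrt_pos. Qed.

Lemma Cmod_sq (u : Cplx) : Cmod u * Cmod u = Re u ^ 2 + Im u ^ 2.
Proof. unfold Cmod; apply sqrt_sqrt; nra. Qed.

Lemma Cmod_le_of_sq (u : Cplx) (B : R) : 0 <= B -> Re u ^ 2 + Im u ^ 2 <= B * B -> Cmod u <= B.
Proof.
  intros HB H. unfold Cmod. rewrite <- (sqrt_square B HB). apply sqrt_le_1_alt. exact H.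
Qed.

Lemma Cmod_tri (u v : Cplx) : Cmod (Cadd u v) <= Cmod u + Cmod v.
Proof.
  apply Cmod_le_of_sq. pose proof (Cmod_ge0 u); pose proof (Cmod_ge0 v); lra.
  pose proof (Cmod_sq u); pose proof (Cmod_sq v); pose proof (Cmod_ge0 u); pose proof (Cmod_ge0 v).
  destruct u as [a b]; destruct v as [c d]; unfold Cadd, Re, Im in *; simpl in *.
  set (P := Cmod (a,b)) in *; set (Q := Cmod (c,d)) in *.
  assert (a*c + b*d <= P*Q).
  { assert ((P*Q)^2 - (a*c+b*d)^2 = (a*d-b*c)^2) by (replace ((P*Q)^2) with ((P*P)*(Q*Q)) by ring; rewrite H, H0; ring).
    assert (0 <= P*Q) by nra.
    destruct (Rle_dec (a*c+b*d) (P*Q)) as [h|h]; auto. exfalso.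
    assert (P*Q < a*c+b*d) by lra.
    assert (P*Q*(P*Q) < (a*c+b*d)*(a*c+b*d)) by (apply Rmult_le_0_lt_compat; lra).
    assert (0 <= (a*d-b*c)^2) by apply pow2_ge_0.
    assert ((P*Q)^2 = P*Q*(P*Q)) by ring. assert ((a*c+b*d)^2 = (a*c+b*d)*(a*c+b*d)) by ring. lra. }
  nra.
Qed.

Lemma Cmod_trisub (u v : Cplx) : Cmod (Csub u v) <= Cmod u + Cmod v.
Proof.
  replace (Csub u v) with (Cadd u (- Re v, - Im v)).
  2:{ unfold Csub, Cadd, Re, Im; simpl; f_equal; ring. }
  replace (Cmod v) with (Cmod (- Re v, - Im v)). apply Cmod_tri.
  unfold Cmod, Re, Im; simpl; f_equal; ring.
Qed.

Lemma Re_le_Cmod (u : Cplx) : Rabs (Re u) <= Cmod u.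
Proof.
  pose proof (Cmod_sq u); pose proof (Cmod_ge0 u).
  apply Rabs_le; split; nra.
Qed.
Lemma Im_le_Cmod (u : Cplx) : Rabs (Im u) <= Cmod u.
Proof.
  pose proof (Cmod_sq u); pose proof (Cmod_ge0 u).
  apply Rabs_le; split; nra.
Qed.

Lemma Cmod_Cexp (u v : R) : Cmod (Cexp (u, v)) = exp u.
Proof.
  unfold Cmod, Cexp, Re, Im; cbn [fst snd].
  replace ((exp u * cos v) ^ 2 + (exp u * sin v) ^ 2) with (exp u * exp u).
  - apply sqrt_square. left; apply exp_pos.
  - pose proof (sin2_cos2 v). unfold Rsqr in *. nra.
Qed.

Lemma Rlim_eq (u : nat -> R) (l : R) : Un_cv u l -> Rlim u = l.
Proof.
  intros H. unfold Rlim. destruct excluded_middle_informative as [e|n].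
  - destruct (constructive_indefinite_description _ e) as [l' Hl']; simpl.
    eapply UL_sequence; eauto.
  - exfalso; apply n; eauto.
Qed.

Lemma cv_le (u : nat -> R) (l M : R) : Un_cv u l -> (forall n, u n <= M) -> l <= M.
Proof.
  intros H HM. destruct (Rle_dec l M) as [h|h]; auto. exfalso.
  destruct (H (l - M)) as [N HN]; [lra|].
  specialize (HN N (le_n N)). specialize (HM N). unfold R_dist in HN.
  apply Rabs_def2 in HN. lra.
Qed.
Fixpoint symsum (f : Z -> R) (N : nat) : R :=
  match N with
  | O => f 0%Z
  | S M => symsum f M + (f (Z.of_nat (S M)) + f (- Z.of_nat (S M))%Z)
  end.

Lemma sym_eq (f : Z -> R) (N : nat) :
  sum_f_R0 (fun k => f (Z.of_nat k - Z.of_nat N)%Z) (2 * N) = symsum f N.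
Proof.
  induction N as [|N IH].
  - simpl. reflexivity.
  - cbn [symsum]. rewrite <- IH.
    replace (2 * S N)%nat with (S (S (2 * N))) by lia.
    rewrite decomp_sum by lia. cbn [Init.Nat.pred].
    rewrite tech5.
    replace (sum_f_R0 (fun i : nat => f (Z.of_nat (S i) - Z.of_nat (S N))%Z) (2 * N))
      with (sum_f_R0 (fun k : nat => f (Z.of_nat k - Z.of_nat N)%Z) (2 * N)).
    2:{ apply sum_eq. intros i _. f_equal. lia. }
    replace (Z.of_nat 0 - Z.of_nat (S N))%Z with (- Z.of_nat (S N))%Z by lia.
    replace (Z.of_nat (S (S (2 * N))) - Z.of_nat (S N))%Z with (Z.of_nat (S N)) by lia.
    ring.
Qed.

Lemma symsum_minus (f g : Z -> R) N : symsum (fun n => f n - g n) N = symsum f N - symsum g N.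
Proof. induction N; simpl; [ring| rewrite IHN; ring]. Qed.
Lemma symsum_plus (f g : Z -> R) N : symsum (fun n => f n + g n) N = symsum f N + symsum g N.
Proof. induction N; simpl; [ring| rewrite IHN; ring]. Qed.

Lemma symsum_cauchy (f : Z -> R) (s : R) : 0 <= s < 1 ->
  (forall n : nat, Rabs (f (Z.of_nat (S n))) + Rabs (f (- Z.of_nat (S n))%Z) <= 2 * s ^ (S n)) ->
  forall n k, Rabs (symsum f (n + k) - symsum f n) <= 2 * s ^ (S n) * (1 - s ^ k) / (1 - s).
Proof.
  intros Hs Hf n k. induction k as [|k IH].
  - rewrite Nat.add_0_r. unfold Rminus at 1. rewrite Rplus_opp_r, Rabs_R0.
    simpl. unfold Rdiv. rewrite Rminus_diag, Rmult_0_r, Rmult_0_l. lra.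
  - replace (n + S k)%nat with (S (n + k)) by lia. cbn [symsum].
    specialize (Hf (n + k)%nat).
    replace (symsum f (n + k) + (f (Z.of_nat (S (n + k))) + f (- Z.of_nat (S (n + k)))%Z) - symsum f n)
      with ((symsum f (n + k) - symsum f n) + (f (Z.of_nat (S (n + k))) + f (- Z.of_nat (S (n + k)))%Z)) by ring.
    eapply Rle_trans. apply Rabs_triang.
    eapply Rle_trans. apply Rplus_le_compat. exact IH.
    eapply Rle_trans. apply Rabs_triang. exact Hf.
    right. replace (S (n + k)) with (S n + k)%nat by lia. rewrite pow_add. simpl. field. lra.
Qed.

Lemma symsum_cv (f : Z -> R) (s : R) : 0 <= s < 1 ->
  (forall n : nat, Rabs (f (Z.of_nat (S n))) + Rabs (f (- Z.of_nat (S n))%Z) <= 2 * s ^ (S n)) ->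
  exists l, Un_cv (symsum f) l.
Proof.
  intros Hs Hf.
  assert (HC : Cauchy_crit (symsum f)).
  { intros eps Heps.
    destruct (pow_lt_1_zero s ltac:(rewrite Rabs_pos_eq; lra) (eps * (1 - s) / 4)) as [N HN].
    { apply Rmult_lt_0_compat; [|lra]. apply Rmult_lt_0_compat; lra. }
    exists N. intros n m Hn Hm. unfold R_dist.
    assert (key : forall a b, (a >= N)%nat -> (b >= a)%nat -> Rabs (symsum f b - symsum f a) < eps).
    { intros a b Ha Hb. replace b with (a + (b - a))%nat by lia.
      eapply Rle_lt_trans. apply (symsum_cauchy f s Hs Hf).
      specialize (HN a Ha). rewrite Rabs_pos_eq in HN by (apply pow_le; lra).
      assert (0 <= s ^ (b - a) <= 1) by (split; [apply pow_le; lra| rewrite <- (pow1 (b-a)); apply pow_incr; lra]).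
      assert (s ^ S a <= s ^ a) by (simpl; assert (0 <= s^a) by (apply pow_le; lra); nra).
      apply (Rmult_lt_reg_r (1 - s)); [lra|]. unfold Rdiv. rewrite Rmult_assoc, Rinv_l, Rmult_1_r by lra.
      assert (0 <= s ^ S a) by (apply pow_le; lra).
      nra. }
    destruct (le_ge_dec n m) as [h|h].
    - rewrite Rabs_minus_sym. apply key; lia.
    - apply key; lia. }
  destruct (R_complete _ HC) as [l Hl]. eauto.
Qed.

Definition csym (F : Z -> Cplx) (N : nat) : Cplx :=
  (symsum (fun n => Re (F n)) N, symsum (fun n => Im (F n)) N).

Lemma csym_S (F : Z -> Cplx) N :
  csym F (S N) = Cadd (Cadd (csym F N) (F (Z.of_nat (S N)))) (F (- Z.of_nat (S N))%Z).
Proof. unfold csym, Cadd, Re, Im; cbn [symsum fst snd]. f_equal; ring. Qed.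

Lemma csym_tail (F : Z -> Cplx) (c r : R) : 0 <= r < 1 ->
  (forall m : nat, Cmod (F (Z.of_nat (S (S m)))) + Cmod (F (- Z.of_nat (S (S m)))%Z) <= c * r ^ m) ->
  forall k, Cmod (Csub (csym F (S k)) (csym F 1)) <= c * (1 - r ^ k) / (1 - r).
Proof.
  intros Hr HF k. induction k as [|k IH].
  - replace (Csub (csym F 1) (csym F 1)) with ((0,0) : Cplx) by (unfold Csub; f_equal; ring).
    unfold Cmod, Re, Im; cbn [fst snd]. replace (0^2+0^2) with 0 by ring. rewrite sqrt_0.
    simpl. unfold Rdiv. rewrite Rminus_diag. lra.
  - replace (Csub (csym F (S (S k))) (csym F 1)) with
      (Cadd (Cadd (Csub (csym F (S k)) (csym F 1)) (F (Z.of_nat (S (S k))))) (F (- Z.of_nat (S (S k)))%Z)).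
    2:{ rewrite (csym_S F (S k)). unfold Csub, Cadd, Re, Im; cbn [fst snd]. f_equal; ring. }
    eapply Rle_trans. apply Cmod_tri.
    eapply Rle_trans. apply Rplus_le_compat_r. apply Cmod_tri.
    specialize (HF k).
    assert (c * (1 - r ^ k) / (1 - r) + c * r ^ k = c * (1 - r ^ S k) / (1 - r)) by (simpl; field; lra).
    lra.
Qed.
Lemma exp_mono (a b : R) : a <= b -> exp a <= exp b.
Proof. intros [h|h]; [left; apply exp_increasing; exact h| subst; lra]. Qed.

Lemma exp_neg_INR (c : R) (j : nat) : exp (- c * INR j) = exp (- c) ^ j.
Proof. rewrite Rmult_comm. apply exp_INR_mult. Qed.

Section Bounds.
Variables (z tau : Cplx).
Hypothesis Ht : 0 < Im tau.
Hypothesis Hz : 0 <= Im z <= Im tau / 4.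

Lemma term_pos (k : nat) :
  Cmod (theta_term z tau (Z.of_nat k)) <= exp (- (PI * Im tau / 2) * (2 * INR k ^ 2)).
Proof.
  unfold theta_term. rewrite Cmod_Cexp. apply exp_mono. rewrite <- INR_IZR_INZ.
  pose proof (pos_INR k). pose proof PI_RGT_0.
  assert (0 <= PI * INR k * Im z) by (apply Rmult_le_pos; [apply Rmult_le_pos|]; lra). nra.
Qed.

Lemma term_neg (k : nat) :
  Cmod (theta_term z tau (- Z.of_nat k)) <= exp (- (PI * Im tau / 2) * (2 * INR k ^ 2 - INR k)).
Proof.
  unfold theta_term. rewrite Cmod_Cexp. apply exp_mono. rewrite opp_IZR, <- INR_IZR_INZ.
  pose proof (pos_INR k). pose proof PI_RGT_0.
  assert (0 <= PI * INR k) by (apply Rmult_le_pos; lra).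
  assert (PI * INR k * Im z <= PI * INR k * (Im tau / 4)) by (apply Rmult_le_compat_l; lra). nra.
Qed.

Lemma term_pos' (k : nat) :
  Cmod (theta_term z tau (Z.of_nat k)) <= exp (- (PI * Im tau / 2) * (2 * INR k ^ 2 - INR k)).
Proof.
  eapply Rle_trans. apply term_pos. apply exp_mono.
  pose proof (pos_INR k). pose proof PI_RGT_0. assert (0 < PI * Im tau) by nra. nra.
Qed.

Definition sq := exp (- (PI * Im tau / 2)).

Lemma sq_pos : 0 < sq.
Proof. apply exp_pos. Qed.

Lemma term_S (k : nat) (n : Z) : (n = Z.of_nat (S k) \/ n = - Z.of_nat (S k))%Z ->
  Cmod (theta_term z tau n) <= sq ^ (S k).
Proof.
  intros Hn. unfold sq. rewrite <- exp_neg_INR.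
  assert (exp (- (PI * Im tau / 2) * (2 * INR (S k) ^ 2 - INR (S k))) <=
          exp (- (PI * Im tau / 2) * INR (S k))).
  { apply exp_mono. pose proof (pos_INR k). rewrite S_INR. pose proof PI_RGT_0.
    assert (0 < PI * Im tau) by nra. nra. }
  destruct Hn as [-> | ->]; eapply Rle_trans; try apply term_pos'; try apply term_neg; auto.
Qed.

Lemma term_SS (m : nat) (n : Z) : (n = Z.of_nat (S (S m)) \/ n = - Z.of_nat (S (S m)))%Z ->
  Cmod (theta_term z tau n) <= sq ^ 6 * (sq ^ 5) ^ m.
Proof.
  intros Hn. unfold sq. rewrite <- pow_mult, <- pow_add, <- exp_neg_INR.
  assert (exp (- (PI * Im tau / 2) * (2 * INR (S (S m)) ^ 2 - INR (S (S m)))) <=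
          exp (- (PI * Im tau / 2) * INR (6 + 5 * m))).
  { apply exp_mono. pose proof (pos_INR m). rewrite plus_INR, mult_INR, !S_INR.
    change (INR 0) with 0.
    pose proof PI_RGT_0.
    assert (0 < PI * Im tau) by nra.
    assert (0 <= PI * Im tau * (INR m * INR m + INR m)) by (apply Rmult_le_pos; nra).
    match goal with |- ?XL <= ?XR => assert (XR - XL = PI * Im tau * (INR m * INR m + INR m)) by field end. lra. }
  destruct Hn as [-> | ->]; eapply Rle_trans; try apply term_pos'; try apply term_neg; auto.
Qed.

End Bounds.

Lemma sqrt3_ge : 1732/1000 <= sqrt 3.
Proof.
  pose proof (sqrt_sqrt 3 ltac:(lra)). pose proof (sqrt_pos 3).
  destruct (Rle_dec (1732/1000) (sqrt 3)) as [h|h]; auto. nra.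
Qed.

Lemma sq_small (tau : Cplx) : sqrt 3 / 4 <= Im tau -> sq tau <= 11/20.
Proof.
  intros H. unfold sq. rewrite exp_Ropp.
  pose proof sqrt3_ge. pose proof PI2_3_2.
  set (x := PI * Im tau / 2).
  assert (Hx : 1299/2000 <= x) by (unfold x; nra).
  assert (E : exp x = exp (x/8) ^ 8).
  { rewrite <- exp_INR_mult. f_equal. simpl. field. }
  assert ((1 + 1299/16000) ^ 8 <= exp x).
  { rewrite E. apply pow_incr. split. lra. eapply Rle_trans; [|apply exp_ineq1_le]. lra. }
  assert (20/11 <= exp x) by (simpl in H2; lra).
  pose proof (exp_pos x).
  replace (11/20) with (/ (20/11)) by field.
  apply Rinv_le_contravar; lra.
Qed.
Lemma term0 (z tau : Cplx) : theta_term z tau 0%Z = (1, 0).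
Proof.
  unfold theta_term, Cexp, Re, Im; cbn [fst snd]. change (IZR 0) with 0.
  replace (- PI * snd tau * 0 ^ 2 - 2 * PI * 0 * snd z) with 0 by ring.
  replace (PI * fst tau * 0 ^ 2 + 2 * PI * 0 * fst z) with 0 by ring.
  rewrite exp_0, cos_0, sin_0. f_equal; ring.
Qed.

Lemma cos_mPI (w : R) : cos (w - PI) = - cos w.
Proof. replace w with ((w - PI) + PI) at 2 by ring. rewrite neg_cos. ring. Qed.
Lemma sin_mPI (w : R) : sin (w - PI) = - sin w.
Proof. replace w with ((w - PI) + PI) at 2 by ring. rewrite neg_sin. ring. Qed.

Lemma term1 (z tau : Cplx) :
  Re (theta_term (Re z + / 2, Im z) tau 1%Z) = - Re (theta_term z tau 1%Z) /\
  Im (theta_term (Re z + / 2, Im z) tau 1%Z) = - Im (theta_term z tau 1%Z).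
Proof.
  unfold theta_term, Cexp, Re, Im; cbn [fst snd]. change (IZR 1) with 1.
  replace (PI * fst tau * 1 ^ 2 + 2 * PI * 1 * (fst z + / 2)) with
    ((PI * fst tau * 1 ^ 2 + 2 * PI * 1 * fst z) + PI) by field.
  rewrite neg_cos, neg_sin. split; ring.
Qed.

Lemma termm1 (z tau : Cplx) :
  Re (theta_term (Re z + / 2, Im z) tau (-1)%Z) = - Re (theta_term z tau (-1)%Z) /\
  Im (theta_term (Re z + / 2, Im z) tau (-1)%Z) = - Im (theta_term z tau (-1)%Z).
Proof.
  unfold theta_term, Cexp, Re, Im; cbn [fst snd]. change (IZR (-1)) with (-1).
  replace (PI * fst tau * (-1) ^ 2 + 2 * PI * (-1) * (fst z + / 2)) with
    ((PI * fst tau * (-1) ^ 2 + 2 * PI * (-1) * fst z) - PI) by field.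
  rewrite cos_mPI, sin_mPI. split; ring.
Qed.
Section Main.
Variables (z tau : Cplx).
Hypothesis Ht : 0 < Im tau.
Hypothesis Ht3 : sqrt 3 / 4 <= Im tau.
Hypothesis Hz : 0 <= Im z <= Im tau / 4.

Let z' : Cplx := (Re z + / 2, Im z).
Let G n := theta_term z tau n.
Let H n := theta_term z' tau n.
Let Ef n := Cadd (G n) (H n).
Let Df n := Csub (G n) (H n).
Let s := sq tau.
Let X := 64 / 15 * s ^ 6.

Lemma Hz' : 0 <= Im z' <= Im tau / 4.
Proof. exact Hz. Qed.

Lemma s_props : 0 < s <= 11/20.
Proof. split. apply sq_pos. apply sq_small; auto. Qed.

Lemma tailE_hyp (F : Z -> Cplx) :
  (forall n, Cmod (F n) <= Cmod (G n) + Cmod (H n)) ->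
  forall m : nat, Cmod (F (Z.of_nat (S (S m)))) + Cmod (F (- Z.of_nat (S (S m)))%Z) <= (4 * s ^ 6) * (1/16) ^ m.
Proof.
  intros HF m. pose proof s_props as [s0 s1].
  assert (Hs5 : (s ^ 5) ^ m <= (1/16) ^ m).
  { apply pow_incr. split. apply pow_le; lra.
    assert (s^5 <= (11/20)^5) by (apply pow_incr; lra). simpl in *; lra. }
  assert (0 <= s^6) by (apply pow_le; lra).
  assert (Cmod (G (Z.of_nat (S (S m)))) <= s ^ 6 * (s ^ 5) ^ m) by (apply term_SS; auto).
  assert (Cmod (G (- Z.of_nat (S (S m)))%Z) <= s ^ 6 * (s ^ 5) ^ m) by (apply term_SS; auto).
  assert (Cmod (H (Z.of_nat (S (S m)))) <= s ^ 6 * (s ^ 5) ^ m) by (apply term_SS; auto; exact Hz).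
  assert (Cmod (H (- Z.of_nat (S (S m)))%Z) <= s ^ 6 * (s ^ 5) ^ m) by (apply term_SS; auto; exact Hz).
  pose proof (HF (Z.of_nat (S (S m)))). pose proof (HF (- Z.of_nat (S (S m)))%Z).
  assert (s ^ 6 * (s ^ 5) ^ m <= s ^ 6 * (1/16) ^ m) by (apply Rmult_le_compat_l; auto).
  lra.
Qed.

Lemma tail_bound (F : Z -> Cplx) :
  (forall n, Cmod (F n) <= Cmod (G n) + Cmod (H n)) ->
  forall k, Cmod (Csub (csym F (S k)) (csym F 1)) <= X.
Proof.
  intros HF k. eapply Rle_trans. apply (csym_tail F (4 * s ^ 6) (1/16)). lra.
  apply tailE_hyp; auto.
  unfold X. assert (0 <= s^6) by (apply pow_le; pose proof s_props; lra).
  assert (0 <= (1/16)^k) by (apply pow_le; lra).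
  unfold Rdiv. nra.
Qed.

Lemma E_bound N : 2 - X <= Re (csym Ef N).
Proof.
  assert (E1 : Re (csym Ef 1) = 2).
  { destruct (term1 z tau) as [a _]. destruct (termm1 z tau) as [b _].
    unfold csym, Ef, Cadd, G, H, z' in *. unfold Re in *; cbn [fst symsum] in *.
    change (Z.of_nat 1) with 1%Z. change (Z.opp 1%Z) with (Zneg xH).
    rewrite !term0. rewrite a, b. cbn [fst]. ring. }
  assert (0 <= X) by (unfold X; apply Rmult_le_pos; [lra| apply pow_le; pose proof s_props; lra]).
  destruct N as [|k].
  - unfold csym, Re at 1; cbn [fst symsum]. unfold Ef, Cadd, Re; cbn [fst].
    unfold G, H; rewrite !term0. cbn [fst]. lra.
  - assert (T := tail_bound Ef (fun n => Cmod_tri (G n) (H n)) k).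
    pose proof (Re_le_Cmod (Csub (csym Ef (S k)) (csym Ef 1))).
    unfold Csub at 1 in H1. unfold Re at 1 in H1. cbn [fst] in H1.
    pose proof (Rle_abs (- (fst (csym Ef (S k)) - Re (csym Ef 1)))) as HH. rewrite Rabs_Ropp in HH. unfold Re in *. lra.
Qed.

Lemma D_bound N : Cmod (csym Df N) <= 2 * s + 2 * s ^ 2 + X.
Proof.
  assert (0 <= X) by (unfold X; apply Rmult_le_pos; [lra| apply pow_le; pose proof s_props; lra]).
  pose proof s_props.
  assert (D0 : csym Df 0 = (0, 0)).
  { unfold csym, Df, Csub, Re, Im, G, H; cbn [symsum fst snd]. rewrite !term0. cbn [fst snd]. f_equal; ring. }
  assert (C0 : Cmod (0, 0) = 0).
  { unfold Cmod, Re, Im; cbn [fst snd]. replace (0^2+0^2) with 0 by ring. apply sqrt_0. }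
  assert (Hsq : exp (- (PI * Im tau / 2) * (2 * INR 1 ^ 2)) = s ^ 2).
  { unfold s, sq. rewrite <- exp_neg_INR. f_equal. simpl. ring. }
  assert (D1 : Cmod (csym Df 1) <= 2 * s + 2 * s ^ 2).
  { rewrite csym_S, D0. eapply Rle_trans. apply Cmod_tri. eapply Rle_trans. apply Rplus_le_compat_r. apply Cmod_tri.
    rewrite C0. unfold Df.
    pose proof (Cmod_trisub (G (Z.of_nat 1)) (H (Z.of_nat 1))).
    pose proof (Cmod_trisub (G (- Z.of_nat 1)%Z) (H (- Z.of_nat 1)%Z)).
    assert (Cmod (G (Z.of_nat 1)) <= exp (- (PI * Im tau / 2) * (2 * INR 1 ^ 2))) by (apply term_pos; auto).
    assert (Cmod (H (Z.of_nat 1)) <= exp (- (PI * Im tau / 2) * (2 * INR 1 ^ 2))) by (apply term_pos; auto; exact Hz).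
    assert (Cmod (G (- Z.of_nat 1)%Z) <= s ^ 1) by (apply term_S; auto).
    assert (Cmod (H (- Z.of_nat 1)%Z) <= s ^ 1) by (apply term_S; auto; exact Hz).
    rewrite Hsq in *. simpl in *. lra. }
  destruct N as [|k].
  - rewrite D0, C0. nra.
  - assert (T := tail_bound Df (fun n => Cmod_trisub (G n) (H n)) k).
    replace (csym Df (S k)) with (Cadd (csym Df 1) (Csub (csym Df (S k)) (csym Df 1))).
    2:{ unfold Cadd, Csub, Re, Im. cbn [fst snd]. destruct (csym Df (S k)); cbn [fst snd]. f_equal; ring. }
    eapply Rle_trans. apply Cmod_tri. lra.
Qed.

End Main.
Lemma Un_cv_ext (u v : nat -> R) l : (forall n, u n = v n) -> Un_cv u l -> Un_cv v l.
Proof. intros E H eps He. destruct (H eps He) as [N HN]. exists N. intros n Hn. rewrite <- E. auto. Qed.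

Lemma cv_ge (u : nat -> R) (l M : R) : Un_cv u l -> (forall n, M <= u n) -> M <= l.
Proof.
  intros H HM. destruct (Rle_dec M l) as [h|h]; auto. exfalso.
  destruct (H (M - l)) as [N HN]; [lra|].
  specialize (HN N (le_n N)). specialize (HM N). unfold R_dist in HN.
  apply Rabs_def2 in HN. lra.
Qed.

Lemma theta_cv (z tau : Cplx) : 0 < Im tau -> sqrt 3 / 4 <= Im tau -> 0 <= Im z <= Im tau / 4 ->
  Un_cv (symsum (fun n => Re (theta_term z tau n))) (Re (theta z tau)) /\
  Un_cv (symsum (fun n => Im (theta_term z tau n))) (Im (theta z tau)).
Proof.
  intros Ht Ht3 Hz.
  assert (Hs : 0 <= sq tau < 1) by (pose proof (sq_pos tau); pose proof (sq_small tau Ht3); lra).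
  assert (Hb : forall n : nat, Cmod (theta_term z tau (Z.of_nat (S n))) + Cmod (theta_term z tau (- Z.of_nat (S n))%Z) <= 2 * sq tau ^ (S n)).
  { intros n. assert (Cmod (theta_term z tau (Z.of_nat (S n))) <= sq tau ^ S n) by (apply term_S; auto).
    assert (Cmod (theta_term z tau (- Z.of_nat (S n))%Z) <= sq tau ^ S n) by (apply term_S; auto). lra. }
  split.
  - destruct (symsum_cv (fun n => Re (theta_term z tau n)) (sq tau) Hs) as [l Hl].
    { intros n. specialize (Hb n). pose proof (Re_le_Cmod (theta_term z tau (Z.of_nat (S n)))).
      pose proof (Re_le_Cmod (theta_term z tau (- Z.of_nat (S n))%Z)). lra. }
    replace (Re (theta z tau)) with l; auto.
    unfold theta. unfold Re at 1. cbn [fst]. symmetry. apply Rlim_eq.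
    apply (Un_cv_ext (symsum (fun n => Re (theta_term z tau n)))); auto.
    intros N. unfold theta_partial. cbn [fst]. rewrite (sym_eq (fun n => Re (theta_term z tau n))). reflexivity.
  - destruct (symsum_cv (fun n => Im (theta_term z tau n)) (sq tau) Hs) as [l Hl].
    { intros n. specialize (Hb n). pose proof (Im_le_Cmod (theta_term z tau (Z.of_nat (S n)))).
      pose proof (Im_le_Cmod (theta_term z tau (- Z.of_nat (S n))%Z)). lra. }
    replace (Im (theta z tau)) with l; auto.
    unfold theta. unfold Im at 1. cbn [snd]. symmetry. apply Rlim_eq.
    apply (Un_cv_ext (symsum (fun n => Im (theta_term z tau n)))); auto.
    intros N. unfold theta_partial. cbn [snd]. rewrite (sym_eq (fun n => Im (theta_term z tau n))). reflexivity.
Qed.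

Lemma main_ineq (z tau : Cplx) : 0 < Im tau -> sqrt 3 / 4 <= Im tau -> 0 <= Im z <= Im tau / 4 ->
  Cmod (Csub (theta00 z tau) (theta01 z tau)) < Cmod (Cadd (theta00 z tau) (theta01 z tau)).
Proof.
  intros Ht Ht3 Hz.
  set (z' := (Re z + / 2, Im z) : Cplx).
  assert (Hz' : 0 <= Im z' <= Im tau / 4) by exact Hz.
  destruct (theta_cv z tau Ht Ht3 Hz) as [cG1 cG2].
  destruct (theta_cv z' tau Ht Ht3 Hz') as [cH1 cH2].
  set (s := sq tau). set (X := 64 / 15 * s ^ 6).
  assert (Hs : 0 < s <= 11/20) by (split; [apply sq_pos| apply sq_small; auto]).
  assert (HX : 0 <= X) by (unfold X; apply Rmult_le_pos; [lra| apply pow_le; lra]).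
  assert (Hs6 : s ^ 6 <= (11/20)^6) by (apply pow_incr; lra).
  assert (Hnum : 2 * s + 2 * s ^ 2 + X < 2 - X).
  { unfold X. simpl in Hs6 |- *. nra. }
  set (Df := fun n => Csub (theta_term z tau n) (theta_term z' tau n)).
  set (Ef := fun n => Cadd (theta_term z tau n) (theta_term z' tau n)).
  assert (DB : forall N, Cmod (csym Df N) <= 2 * s + 2 * s ^ 2 + X) by exact (D_bound z tau Ht Ht3 Hz).
  assert (EB : forall N, 2 - X <= Re (csym Ef N)) by exact (E_bound z tau Ht Ht3 Hz).
  unfold theta00, theta01. fold z'.
  set (A := theta z tau) in *. set (B := theta z' tau) in *.
  assert (cDr : Un_cv (fun N => Re (csym Df N)) (Re A - Re B)).
  { apply (Un_cv_ext (fun N => symsum (fun n => Re (theta_term z tau n)) N - symsum (fun n => Re (theta_term z' tau n)) N)).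
    intros N. unfold csym, Df, Csub, Re; cbn [fst]. rewrite <- symsum_minus. reflexivity.
    apply CV_minus; auto. }
  assert (cDi : Un_cv (fun N => Im (csym Df N)) (Im A - Im B)).
  { apply (Un_cv_ext (fun N => symsum (fun n => Im (theta_term z tau n)) N - symsum (fun n => Im (theta_term z' tau n)) N)).
    intros N. unfold csym, Df, Csub, Im; cbn [snd]. rewrite <- symsum_minus. reflexivity.
    apply CV_minus; auto. }
  assert (cEr : Un_cv (fun N => Re (csym Ef N)) (Re A + Re B)).
  { apply (Un_cv_ext (fun N => symsum (fun n => Re (theta_term z tau n)) N + symsum (fun n => Re (theta_term z' tau n)) N)).
    intros N. unfold csym, Ef, Cadd, Re; cbn [fst]. rewrite <- symsum_plus. reflexivity.
    apply CV_plus; auto. }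
  assert (cEi : Un_cv (fun N => Im (csym Ef N)) (Im A + Im B)).
  { apply (Un_cv_ext (fun N => symsum (fun n => Im (theta_term z tau n)) N + symsum (fun n => Im (theta_term z' tau n)) N)).
    intros N. unfold csym, Ef, Cadd, Im; cbn [snd]. rewrite <- symsum_plus. reflexivity.
    apply CV_plus; auto. }
  set (BO := 2 * s + 2 * s ^ 2 + X) in *.
  assert (HBO : 0 <= BO) by (unfold BO; nra).
  assert (L1 : (Re A - Re B) * (Re A - Re B) + (Im A - Im B) * (Im A - Im B) <= BO * BO).
  { apply (cv_le (fun N => Re (csym Df N) * Re (csym Df N) + Im (csym Df N) * Im (csym Df N))).
    apply CV_plus; apply CV_mult; auto.
    intros N. specialize (DB N). pose proof (Cmod_sq (csym Df N)) as Q1. pose proof (Cmod_ge0 (csym Df N)).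
    assert (Cmod (csym Df N) * Cmod (csym Df N) <= BO * BO) by (apply Rmult_le_compat; lra).
    assert (Re (csym Df N) ^ 2 + Im (csym Df N) ^ 2 = Re (csym Df N) * Re (csym Df N) + Im (csym Df N) * Im (csym Df N)) by ring. lra. }
  assert (L2 : (2 - X) * (2 - X) <= (Re A + Re B) * (Re A + Re B) + (Im A + Im B) * (Im A + Im B)).
  { apply (cv_ge (fun N => Re (csym Ef N) * Re (csym Ef N) + Im (csym Ef N) * Im (csym Ef N))).
    apply CV_plus; apply CV_mult; auto.
    intros N. specialize (EB N).
    assert ((2 - X) * (2 - X) <= Re (csym Ef N) * Re (csym Ef N)) by (apply Rmult_le_compat; lra).
    assert (0 <= Im (csym Ef N) * Im (csym Ef N)) by nra. lra. }
  assert (C1 : Cmod (Csub A B) <= BO).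
  { apply Cmod_le_of_sq; auto. change (Re (Csub A B)) with (Re A - Re B). change (Im (Csub A B)) with (Im A - Im B).
    assert ((Re A - Re B) ^ 2 + (Im A - Im B) ^ 2 = (Re A - Re B) * (Re A - Re B) + (Im A - Im B) * (Im A - Im B)) by ring. lra. }
  assert (C2 : 2 - X <= Cmod (Cadd A B)).
  { pose proof (Cmod_sq (Cadd A B)) as Q2. pose proof (Cmod_ge0 (Cadd A B)).
    change (Re (Cadd A B)) with (Re A + Re B) in Q2. change (Im (Cadd A B)) with (Im A + Im B) in Q2.
    assert ((Re A + Re B) ^ 2 + (Im A + Im B) ^ 2 = (Re A + Re B) * (Re A + Re B) + (Im A + Im B) * (Im A + Im B)) by ring.
    destruct (Rle_dec (2 - X) (Cmod (Cadd A B))) as [h|h]; auto. exfalso.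
    assert (Cmod (Cadd A B) * Cmod (Cadd A B) < (2 - X) * (2 - X)) by (apply Rmult_le_0_lt_compat; lra).
    lra. }
  lra.
Qed.

Lemma div_pos (A B : Cplx) : Cmod (Csub A B) < Cmod (Cadd A B) -> 0 < Re (Cdiv B A).
Proof.
  intros H.
  pose proof (Cmod_sq (Csub A B)). pose proof (Cmod_sq (Cadd A B)).
  pose proof (Cmod_ge0 (Csub A B)).
  assert (Cmod (Csub A B) * Cmod (Csub A B) < Cmod (Cadd A B) * Cmod (Cadd A B)) by (apply Rmult_le_0_lt_compat; lra).
  destruct A as [a b]; destruct B as [c d].
  unfold Csub, Cadd, Cdiv, Cmul, Cinv, Re, Im in *; cbn [fst snd] in *.
  assert (Hdot : 0 < a * c + b * d) by (simpl in *; nra).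
  assert (Hn : 0 < a ^ 2 + b ^ 2).
  { destruct (Req_dec a 0); destruct (Req_dec b 0); subst; simpl; try nra. }
  replace (c * (a / (a ^ 2 + b ^ 2)) - d * (- b / (a ^ 2 + b ^ 2))) with ((a * c + b * d) / (a ^ 2 + b ^ 2)) by (field; lra).
  apply Rdiv_lt_0_compat; lra.
Qed.

Theorem mainTheorem5 (z tau : Cplx) :
  0 < Im tau ->
  sqrt 3 / 4 <= Im tau ->
  0 <= Im z <= Im tau / 4 ->
  Cmod (Csub (theta00 z tau) (theta01 z tau)) < Cmod (Cadd (theta00 z tau) (theta01 z tau)) /\
  0 < Re (Cdiv (theta01 z tau) (theta00 z tau)) /\
  0 < Re (Cdiv (theta01 (0, 0) tau) (theta00 (0, 0) tau)).
Proof.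
  intros Ht Ht3 Hz.
  assert (M := main_ineq z tau Ht Ht3 Hz).
  split; [exact M|split].
  - apply div_pos; exact M.
  - apply div_pos. apply main_ineq; auto. unfold Im; cbn [snd]. split; [lra|]. unfold Im in Ht; lra.
Qed.
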